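(* Let $S$ be a finite set of at least three points in the plane, $v>1$, and $s\in S$. Let $H_s$ be an axis-aligned speed-$v$ highway cross that minimizes $\max_{q\in S}t_{H}(s,q)$ over all axis-aligned speed-$v$ highway crosses $H$. Then the travel-time diameter $\max_{p,q\in S}t_{H_s}(p,q)$ is at most $2\delta_{\mathrm{opt}}$, where $\delta_{\mathrm{opt}}$ is the travel-time diameter of $S$ for an optimal axis-aligned speed-$v$ highway cross.
   Context: The underlying metric is the $L_1$-metric. An axis-aligned highway cross is the union $H$ of a horizontal and a vertical line; one travels with speed $1$ off $H$ ($L_1$-lengths) and with speed $v$ along either line of $H$. The travel time $t_H(p,q)$ is the minimum time of a path from $p$ to $q$; the travel-time diameter of $S$ is $\max_{p,q\in S}t_H(p,q)$, and an optimal highway cross minimizes it. *)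

(* Defs.v *)
From mathcomp Require Import all_boot all_order all_algebra.
From mathcomp Require Import boolp classical_sets reals.
Set Implicit Arguments. Unset Strict Implicit. Unset Printing Implicit Defensive.
Import Order.TTheory GRing.Theory Num.Theory.
Local Open Scope ring_scope.
Local Open Scope classical_set_scope.

Section Highway.
Variable R : realType.

Definition plane_pt := (R * R)%type.

Definition d1 (p q : plane_pt) : R := `|p.1 - q.1| + `|p.2 - q.2|.

(* An axis-aligned highway cross, encoded by (a, b): the union of the
   vertical line x = a and the horizontal line y = b. *)
Definition cross := (R * R)%type.

Definition on_highway (H : cross) (p q : plane_pt) : bool :=
  ((p.1 == H.1) && (q.1 == H.1)) || ((p.2 == H.2) && (q.2 == H.2)).

Definition seg_time (v : R) (H : cross) (p q : plane_pt) : R :=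
  if on_highway H p q then d1 p q / v else d1 p q.

Fixpoint chain_time (v : R) (H : cross) (x : plane_pt) (l : seq plane_pt) : R :=
  if l is y :: l' then seg_time v H x y + chain_time v H y l' else 0.

Definition path_time (v : R) (H : cross) (p : plane_pt) (l : seq plane_pt) (q : plane_pt) : R :=
  chain_time v H p (rcons l q).

Definition travel_time (v : R) (H : cross) (p q : plane_pt) : R :=
  inf [set t | exists l : seq plane_pt, t = path_time v H p l q].

Definition eccentricity (v : R) (H : cross) (S : seq plane_pt) (s : plane_pt) : R :=
  \big[Num.max/0]_(q <- S) travel_time v H s q.

Definition tt_diameter (v : R) (H : cross) (S : seq plane_pt) : R :=
  \big[Num.max/0]_(p <- S) \big[Num.max/0]_(q <- S) travel_time v H p q.

End Highway.

(* Main.v *)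
Require Import Defs.
From mathcomp Require Import all_boot all_order all_algebra.
From mathcomp Require Import boolp classical_sets reals.
Import Order.TTheory GRing.Theory Num.Theory.
Local Open Scope ring_scope.
Local Open Scope classical_set_scope.

Section Aux.
Variable R : realType.
Variable v : R.
Hypothesis v0 : 0 < v.
Variable H : cross R.

Lemma seg_time_ge0 (p q : plane_pt R) : 0 <= seg_time v H p q.
Proof.
rewrite /seg_time /d1; case: ifP => _.
  by apply: divr_ge0; [apply: addr_ge0 | apply: ltW].
by apply: addr_ge0.
Qed.

Lemma seg_timeC (p q : plane_pt R) : seg_time v H p q = seg_time v H q p.
Proof.
rewrite /seg_time /d1 /on_highway (distrC p.1) (distrC p.2).
by rewrite (andbC (p.1 == _)) (andbC (p.2 == _)).
Qed.

Lemma chain_ge0 x l : 0 <= chain_time v H x l.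
Proof.
elim: l x => [|y l IH] x /=; first by [].
by apply: addr_ge0; [apply: seg_time_ge0 | apply: IH].
Qed.

Lemma chain_cat x l1 l2 :
  chain_time v H x (l1 ++ l2) = chain_time v H x l1 + chain_time v H (last x l1) l2.
Proof.
elim: l1 x => [|y l IH] x /=; first by rewrite add0r.
by rewrite IH addrA.
Qed.

Lemma chain_rev x l y :
  chain_time v H x (rcons l y) = chain_time v H y (rcons (rev l) x).
Proof.
elim: l x => [|z l IH] x /=.
  by rewrite seg_timeC.
rewrite IH rev_cons -[in RHS]cats1 chain_cat last_rcons /= addr0 addrC.
by rewrite seg_timeC.
Qed.

Definition tset p q := [set t | exists l : seq (plane_pt R), t = path_time v H p l q].

Lemma tset_n0 p q : (tset p q !=set0)%classic.
Proof. by exists (path_time v H p [::] q); exists [::]. Qed.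

Lemma tset_lb p q : has_lbound (tset p q).
Proof. by exists 0 => t [l ->]; apply: chain_ge0. Qed.

Lemma tt_le p q l : travel_time v H p q <= path_time v H p l q.
Proof. by apply: (ge_inf (tset_lb p q)); exists l. Qed.

Lemma tt_ge0 p q : 0 <= travel_time v H p q.
Proof. by apply: lb_le_inf; [apply: tset_n0 | move=> t [l ->]; apply: chain_ge0]. Qed.

Lemma tt_glb p q x : (forall l, x <= path_time v H p l q) -> x <= travel_time v H p q.
Proof. by move=> h; apply: lb_le_inf; [apply: tset_n0 | move=> t [l ->]]. Qed.

Lemma tt_sym_le p q : travel_time v H p q <= travel_time v H q p.
Proof.
apply: lb_le_inf; first by apply: tset_n0.
move=> t [l ->]; rewrite /path_time chain_rev.
exact: (tt_le p q (rev l)).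
Qed.

Lemma tt_sym p q : travel_time v H p q = travel_time v H q p.
Proof. by apply/le_anti; rewrite !tt_sym_le. Qed.

Lemma tt_tri p s q :
  travel_time v H p q <= travel_time v H p s + travel_time v H s q.
Proof.
rewrite -lerBlDr.
apply: tt_glb => l1; rewrite lerBlDl.
rewrite -lerBlDr.
apply: tt_glb => l2; rewrite lerBlDl addrC.
have := tt_le p q (l1 ++ s :: l2).
rewrite /path_time -cat_rcons rcons_cat chain_cat last_rcons. by rewrite addrC.
Qed.

End Aux.

Theorem lemma4 (R : realType) (S : seq (plane_pt R)) (v : R) (s : plane_pt R)
    (Hs : cross R) :
  uniq S -> (3 <= size S)%N -> 1 < v -> s \in S ->
  (forall H : cross R, eccentricity v Hs S s <= eccentricity v H S s) ->
  forall Hopt : cross R,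
    (forall H : cross R, tt_diameter v Hopt S <= tt_diameter v H S) ->
    tt_diameter v Hs S <= 2 * tt_diameter v Hopt S.
Proof.
move=> _ _ v1 sS Hecc Hopt _.
have v0 : 0 < v by apply: lt_trans v1.
have E0 : 0 <= eccentricity v Hs S s.
  rewrite /eccentricity; apply: (le_trans (@tt_ge0 R v v0 Hs s s)); exact: le_bigmax_seq.
have Eopt : eccentricity v Hopt S s <= tt_diameter v Hopt S.
  by rewrite /tt_diameter; apply: (le_bigmax_seq _ s xpredT (fun p => \big[Num.max/0]_(q <- S) travel_time v Hopt p q)).
have E2 : eccentricity v Hs S s <= tt_diameter v Hopt S by apply: le_trans (Hecc Hopt) Eopt.
have Ele : forall q, q \in S -> travel_time v Hs s q <= eccentricity v Hs S s.
  by move=> q qS; apply: le_bigmax_seq.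
rewrite /tt_diameter [X in X <= _]big_seq; apply: bigmax_le => [|p pS].
  by apply: mulr_ge0 => //; apply: le_trans E0 E2.
rewrite big_seq; apply: bigmax_le => [|q qS].
  by apply: mulr_ge0 => //; apply: le_trans E0 E2.
apply: (le_trans (@tt_tri R v v0 Hs p s q)).
rewrite mulr2n mulrDl mul1r; apply: lerD; apply: le_trans E2.
  by rewrite (@tt_sym R v v0); apply: Ele.
by apply: Ele.
Qed.
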